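(* Let $t\ge2$ and $n\ge1$ be integers and let $\lambda$ be a $t$-core of length at most $tn+1$. Then \[\mathrm{rk}(\lambda)=(n_0(\lambda)-n-1)_++\sum_{i=1}^{t-1}(n_i(\lambda)-n)_+ ,\] where $m_+=\max(m,0)$.
   Context: A $t$-core is a partition with no hook length divisible by $t$. $\mathrm{rk}(\lambda)$ (Frobenius rank) is the largest $j$ with $\lambda_j\ge j$. The beta-set of $\lambda$ is $\beta_i(\lambda)=\lambda_i+tn+1-i$ for $1\le i\le tn+1$, and $n_i(\lambda)$ is the number of $\beta_j(\lambda)$ congruent to $i$ modulo $t$, $0\le i\le t-1$. *)

(* Defs.v *)
From mathcomp Require Import all_boot.
Set Implicit Arguments. Unset Strict Implicit. Unset Printing Implicit Defensive.

(* A partition is a seq nat, weakly decreasing, with all parts positive.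
   lam_i (1-indexed) := nth 0 lam (i-1), so lam_i = 0 beyond the length. *)
Definition is_partition (la : seq nat) : bool :=
  sorted geq la && all (fun x => 0 < x) la.

Definition part (la : seq nat) (i : nat) : nat := nth 0 la i.-1.

Definition conj_part (la : seq nat) (j : nat) : nat := count (fun x => j <= x) la.

Definition hook (la : seq nat) (i j : nat) : nat :=
  (part la i - j) + (conj_part la j - i) + 1.

Definition is_cell (la : seq nat) (i j : nat) : bool :=
  (1 <= i <= size la) && (1 <= j <= part la i).

Definition is_core (t : nat) (la : seq nat) : Prop :=
  forall i j, is_cell la i j -> ~~ (t %| hook la i j).

Definition frob_rank (la : seq nat) : nat :=
  \max_(j < (size la).+1 | j <= part la j) j.

(* beta_i = lam_i + t*n + 1 - i for 1 <= i <= t*n+1 (never negative) *)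
Definition beta (t n : nat) (la : seq nat) (i : nat) : nat :=
  part la i + t * n + 1 - i.

Definition nres (t n : nat) (la : seq nat) (r : nat) : nat :=
  #|[set i : 'I_(t * n + 1) | beta t n la i.+1 %% t == r]|.

(* Main.v *)
Require Import Defs.
From mathcomp Require Import all_boot zify.

Lemma iotaSr N : iota 0 N.+1 = iota 0 N ++ [:: N].
Proof. by rewrite -addn1 iotaD. Qed.

Lemma count_iota_lt m N : count (fun i => i < m) (iota 0 N) = minn m N.
Proof.
elim: N => [|N IH]; first by rewrite minn0.
by rewrite iotaSr count_cat IH /= addn0; case: (ltnP N m) => H; lia.
Qed.

Lemma count_iota_ge K m : count (fun i => K <= i) (iota 0 m) = m - K.
Proof.
elim: m => [|m IH] //.
by rewrite iotaSr count_cat IH /= addn0; case: (leqP K m) => H; lia.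
Qed.

Lemma count_down (P : pred nat) N :
  (forall l l', l' <= l -> l < N -> P l -> P l') ->
  forall l, l < N -> P l = (l < count P (iota 0 N)).
Proof.
elim: N => [|N IH] Hd l Hl //.
have Hd' : forall l l', l' <= l -> l < N -> P l -> P l'.
  by move=> a b Hab Ha; apply: Hd => //; lia.
rewrite iotaSr count_cat /= addn0.
case PN: (P N).
  have ->: count P (iota 0 N) = N.
    rewrite -{2}(size_iota 0 N) -(count_predT (iota 0 N)); apply: eq_in_count => x.
    rewrite mem_iota => /andP [_ Hx] /=. apply: (Hd N) => //; lia.
  by rewrite (Hd N l) //; lia.
have Hc : count P (iota 0 N) <= N by rewrite -[X in _ <= X](size_iota 0 N) count_size.
case: (ltnP l N) => Hl'; first by rewrite (IH Hd' l Hl'); lia.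
have -> : l = N by lia.
by rewrite PN; lia.
Qed.

Lemma sum_split_mod (t : nat) (a : pred nat) (s : seq nat) : 0 < t ->
  count a s = \sum_(r < t) count (fun b => (b %% t == r) && a b) s.
Proof.
move=> Ht; elim: s => [|x s IH].
  by rewrite big1.
rewrite /= big_split /= -IH; congr (_ + _).
rewrite (bigD1 (Ordinal (ltn_pmod x Ht))) //= eqxx /= big1 ?addn0 //.
move=> i Hi; case E: (x %% t == i) => //=.
by move/eqP: Hi; case; apply/eqP; rewrite eq_sym -(inj_eq val_inj) /= E.
Qed.

Lemma residue_count t (s : seq nat) r (Q : pred nat) : 0 < t -> r < t -> uniq s ->
  (forall b, b \in s -> t <= b -> b - t \in s) ->
  count (fun b => (b %% t == r) && Q b) s =
  count (fun k => Q (r + k * t)) (iota 0 (count (fun b => b %% t == r) s)).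
Proof.
move=> Ht Hr Hu Hc.
set f := filter (fun b => b %% t == r) s.
set g := map (fun k => r + k * t) (iota 0 (count (fun b => b %% t == r) s)).
have Hmod : forall k, (r + k * t) %% t = r.
  by move=> k; rewrite addnC modnMDl modn_small.
have Hdown : forall k, r + k * t \in s -> forall k', k' <= k -> r + k' * t \in s.
  elim=> [|k IH] Hk k' Hk'.
    by have -> : k' = 0 by lia.
  case: (ltnP k' k.+1) => H.
    apply: IH => //.
    have := Hc _ Hk; rewrite mulSn.
    have -> : r + (t + k * t) - t = r + k * t by lia.
    by apply; lia.
  by have -> : k' = k.+1 by lia.
have ginj : injective (fun k => r + k * t).
  by move=> a b /addnI /eqP; rewrite eqn_pmul2r // => /eqP.
have Hsub : {subset f <= g}.
  move=> b; rewrite mem_filter => /andP [/eqP Hb Hbs].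
  have Eb : b = r + (b %/ t) * t by rewrite {1}(divn_eq b t) Hb addnC.
  have Hle : (b %/ t).+1 <= size f.
    have := uniq_leq_size (s1 := map (fun k => r + k * t) (iota 0 (b %/ t).+1)) (s2 := f).
    rewrite size_map size_iota; apply.
      by rewrite map_inj_uniq // iota_uniq.
    move=> x /mapP [k]; rewrite mem_iota => /andP [_ Hk] ->.
    rewrite mem_filter Hmod eqxx /=; apply: (Hdown (b %/ t)); first by rewrite -Eb.
    lia.
  rewrite Eb; apply: map_f; rewrite mem_iota /= add0n -size_filter -/f; lia.
have Hsz0 : size g <= size f by rewrite size_map size_iota size_filter.
have [Hsz Heq] := uniq_min_size (filter_uniq _ Hu) Hsub Hsz0.
have Hp : perm_eq f g.
  apply: uniq_perm => //; first exact: filter_uniq.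
  by rewrite map_inj_uniq // iota_uniq.
have -> : count (fun b => (b %% t == r) && Q b) s = count Q f.
  by rewrite count_filter; apply: eq_count => x /=; rewrite andbC.
by rewrite (permP Hp) count_map.
Qed.

Lemma part_mono la i j : is_partition la -> 1 <= i <= j -> part la j <= part la i.
Proof.
move=> /andP [Hs _] /andP [Hi Hij]; rewrite /part.
case: (ltnP j.-1 (size la)) => Hj; last by rewrite nth_default.
have Hgt : transitive geq by move=> a b c H1 H2; exact: leq_trans H2 H1.
apply: (sorted_leq_nth Hgt (fun x => leqnn x) 0 Hs); rewrite ?inE //; lia.
Qed.

Lemma part_nz la i : 0 < part la i -> i.-1 < size la.
Proof.
rewrite /part; case: (ltnP i.-1 (size la)) => // H; by rewrite nth_default.
Qed.

Lemma frob_count t n la : is_partition la -> size la <= t * n + 1 ->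
  frob_rank la = count (fun i => t * n + 1 <= beta t n la i.+1) (iota 0 (t * n + 1)).
Proof.
move=> Hp Hsz; set N := t * n + 1.
set R := frob_rank la.
have [HR1 HR2] : R <= part la R /\ R <= size la.
  rewrite /R /frob_rank; apply: (big_ind (fun m => m <= part la m /\ m <= size la)) => //.
  - move=> x y [H1 H2] [H3 H4]; rewrite /maxn; case: ifP => _; by split.
  - move=> j Hj; split => //; have := ltn_ord j; lia.
rewrite (eq_in_count (a2 := fun i => i < R)).
  by rewrite count_iota_lt; lia.
move=> i; rewrite mem_iota /= => Hi.
rewrite /beta.
have -> : (N <= part la i.+1 + t * n + 1 - i.+1) = (i.+1 <= part la i.+1) by rewrite /N; lia.
apply/idP/idP => H.
  have Hsi : i < size la by by have := @part_nz la i.+1; apply; lia.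
  have Hlt : i.+1 < (size la).+1 by [].
  have := leq_bigmax_cond (P := fun j : 'I_(size la).+1 => j <= part la j) (F := fun j => nat_of_ord j) (Ordinal Hlt) H.
  by rewrite /R /frob_rank.
apply: (leq_trans H); apply: (leq_trans HR1); apply: part_mono => //; lia.
Qed.

Lemma nres_count t n la r :
  nres t n la r = count (fun i => beta t n la i.+1 %% t == r) (iota 0 (t * n + 1)).
Proof.
rewrite /nres cardsE -sum1_card -(@big_mkord nat 0 addn (t*n+1) (fun i => beta t n la i.+1 %% t == r) (fun=> 1)) -sum1_count.
by rewrite /index_iota subn0.
Qed.

Lemma beta_uniq t n la : is_partition la ->
  uniq (map (fun i => beta t n la i.+1) (iota 0 (t * n + 1))).
Proof.
move=> Hp; rewrite map_inj_in_uniq ?iota_uniq //.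
move=> i j; rewrite !mem_iota /= /beta => Hi Hj.
case: (ltngtP i j) => // H.
  have := @part_mono la i.+1 j.+1 Hp; lia.
have := @part_mono la j.+1 i.+1 Hp; lia.
Qed.

Lemma conj_count la j m : is_partition la -> 1 <= j -> 1 <= m ->
  j <= part la m -> part la m.+1 < j -> conj_part la j = m.
Proof.
move=> Hp Hj Hm H1 H2.
have Hms : m <= size la.
  have := @part_nz la m; lia.
rewrite /conj_part -{1}(mkseq_nth 0 la) /mkseq count_map.
rewrite (eq_in_count (a2 := fun i => i < m)).
  by rewrite count_iota_lt; lia.
move=> idx; rewrite mem_iota /= => Hidx.
have -> : nth 0 la idx = part la idx.+1 by [].
case: (ltnP idx m) => H.
  by have := @part_mono la idx.+1 m Hp; lia.
by have := @part_mono la m.+1 idx.+1 Hp; lia.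
Qed.

Lemma down_closed t n la i : 2 <= t -> is_partition la -> is_core t la ->
  size la <= t * n + 1 -> i < t * n + 1 -> t <= beta t n la i.+1 ->
  has (fun l => beta t n la l.+1 == beta t n la i.+1 - t) (iota 0 (t * n + 1)).
Proof.
move=> Ht Hp Hc Hsz Hi Htb.
case Hh: has => //; exfalso.
have Hb : forall l, beta t n la l = part la l + t * n + 1 - l by [].
set N := t * n + 1 in Hsz Hi Hh Hb *.
set c := beta t n la i.+1 - t in Hh *.
have Hnot : forall l, l < N -> beta t n la l.+1 != c.
  move=> l Hl; move/negbT/hasPn: Hh; apply; by rewrite mem_iota.
set P := fun l => c < beta t n la l.+1.
have HP := @count_down P N.
set m := count P (iota 0 N) in HP.
have {}HP : forall l, l < N -> P l = (l < m).
  apply: HP => l l' Hll' HlN; rewrite /P !Hb.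
  have := @part_mono la l'.+1 l.+1 Hp; lia.
have Hm : m <= N by rewrite /m -[X in _ <= X](size_iota 0 N) count_size.
have Hci : P i by rewrite /P /c; lia.
have Him : i < m by rewrite -HP.
have Hpm : P m.-1 by rewrite HP; lia.
rewrite /P Hb (_ : m.-1.+1 = m) in Hpm; last by lia.
have Hlast : part la m.+1 + N < c + m + 1.
  case: (ltnP m N) => HmN.
    have Hn := Hnot m HmN.
    have : ~~ P m by rewrite (HP m HmN) ltnn.
    rewrite /P Hb -leqNgt => Hle.
    move: Hn; rewrite Hb; lia.
  have -> : m = N by lia.
  rewrite /part nth_default /=; last by lia.
  have := Hnot i Hi; rewrite Hb /c; lia.
set j := c + 1 + m - N.
have Hj1 : 1 <= j by rewrite /j; lia.
have Hjm : j <= part la m by rewrite /j; lia.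
have Hjm1 : part la m.+1 < j by rewrite /j; lia.
have Hm1 : 0 < m by lia.
have Hconj := @conj_count la j m Hp Hj1 Hm1 Hjm Hjm1.
have Hmono := @part_mono la i.+1 m Hp.
have Hms : m <= size la by have := @part_nz la m; lia.
have Hcell : is_cell la i.+1 j.
  rewrite /is_cell; apply/andP; split; apply/andP; split; lia.
have := Hc _ _ Hcell.
have -> : hook la i.+1 j = t.
  have Hjd : j + N = c + 1 + m by rewrite /j; lia.
  have Hcd : c + t = part la i.+1 + t * n + 1 - i.+1 by rewrite /c -Hb; lia.
  rewrite /hook Hconj; move: Htb; rewrite Hb; lia.
by rewrite dvdnn.
Qed.

Lemma thr t n r k : 0 < t -> r < t ->
  (t * n + 1 <= r + k * t) = ((if r == 0 then n.+1 else n) <= k).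
Proof.
move=> Ht Hr; case: eqP => [->|Hr0].
  by rewrite add0n addn1 [k * t]mulnC ltn_pmul2l.
case: (leqP n k) => H.
  have := leq_mul H (leqnn t).
  lia.
have := leq_mul H (leqnn t); rewrite mulSn.
lia.
Qed.

Theorem lemma3p2 (t n : nat) (la : seq nat) :
  2 <= t -> 1 <= n ->
  is_partition la -> is_core t la -> size la <= t * n + 1 ->
  frob_rank la = (nres t n la 0 - n - 1) + \sum_(1 <= i < t) (nres t n la i - n).
Proof.
move=> Ht Hn Hp Hc Hsz.
have Ht0 : 0 < t by lia.
rewrite (@frob_count t n la Hp Hsz).
set N := t * n + 1 in Hsz *.
set bs := map (fun i => beta t n la i.+1) (iota 0 N).
have Hu : uniq bs by exact: beta_uniq.
have Hcl : forall b, b \in bs -> t <= b -> b - t \in bs.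
  move=> b /mapP [i]; rewrite mem_iota /= => Hi -> Htb.
  have /hasP [l Hl /eqP Hle] := @down_closed t n la i Ht Hp Hc Hsz Hi Htb.
  by rewrite -Hle; apply: map_f.
have Hnr : forall r, nres t n la r = count (fun b => b %% t == r) bs.
  by move=> r; rewrite nres_count count_map.
rewrite -(count_map (fun i => beta t n la i.+1) (fun b => N <= b)) -/bs.
rewrite (@sum_split_mod t _ _ Ht0).
rewrite (eq_bigr (fun r : 'I_t => nres t n la r - (if (r : nat) == 0 then n.+1 else n))); last first.
  move=> r _; rewrite (@residue_count t bs r _ Ht0 (ltn_ord r) Hu Hcl) -Hnr.
  rewrite (eq_count (a2 := fun k => (if (r : nat) == 0 then n.+1 else n) <= k)).
    by rewrite count_iota_ge.
  by move=> k /=; rewrite thr.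
rewrite -(@big_mkord nat 0 addn t xpredT (fun r => nres t n la r - (if r == 0 then n.+1 else n))).
rewrite big_ltn //= ; congr (_ + _); first lia.
apply: eq_big_nat => i /andP [Hi _].
by have -> : (i == 0) = false by lia.
Qed.
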